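(* Consider any instance $\mathcal{I}$ of the online volunteer notification problem whose inter-activity time distribution has minimum discrete hazard rate $q$. Then the scaled-down notification (SDN) policy is $\frac{1}{2-q}\left(1-\frac{1}{e}\right)$-competitive, i.e., $\mathbf{POL}_{\mathcal{I}}\ge\frac{1}{2-q}\left(1-\frac1e\right)\mathbf{LP}_{\mathcal{I}}$ for every such instance, where $\mathbf{POL}_{\mathcal{I}}$ is the SDN policy's expected number of completed tasks.
   Context: Online volunteer notification problem. An instance $\mathcal{I}$ consists of volunteers $[V]$, task types $[S]$, horizon $T$, arrival probabilities $\lambda_{s,t}\ge0$ with $\sum_{s=1}^S\lambda_{s,t}\le1$, match probabilities $p_{v,s}\in[0,1]$, and a probability mass function $g$ on the positive integers with CDF $G(\tau)=\sum_{i\le\tau}g(i)$, $G(0)=0$. In each period $t$ at most one task arrives, of type $s$ with probability $\lambda_{s,t}$, independently across periods. All volunteers start active. Upon an arrival the platform immediately and irrevocably notifies a subset of volunteers; each notified active volunteer $v$ responds positively independently with probability $p_{v,s}$, and the task is completed iff at least one does. A volunteer who is active and notified at time $t$ becomes inactive (regardless of response) and becomes active again at time $t+Z$, $Z\sim g$ independent; inactive volunteers ignore notifications and are unaffected by them. The platform knows $\lambda,p,g$ but not states. MDHR: $q=\min_{\tau\in\mathbb{N}}\frac{g(\tau)}{1-G(\tau-1)}$ (with $\frac00:=1$). $\mathcal{P}$: set of $\mathbf{x}\in\mathbb{R}^{V\times S\times T}$ with $0\le x_{v,s,t}\le1$ and $\sum_{\tau=1}^t\sum_{s}\lambda_{s,\tau}x_{v,s,\tau}(1-G(t-\tau))\le1$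 for all $v,t$. $\mathbf{LP}_{\mathcal{I}}=\max_{\mathbf{x}\in\mathcal{P}}\sum_{t,s}\lambda_{s,t}\min\{\sum_v x_{v,s,t}p_{v,s},1\}$. A policy is $c$-competitive if $\mathbf{POL}_{\mathcal{I}}\ge c\,\mathbf{LP}_{\mathcal{I}}$ for all instances. Ex ante solution: $f(\mathbf{x})=\sum_{t,s}\lambda_{s,t}\big(1-\prod_{v}(1-x_{v,s,t}p_{v,s})\big)$; $\mathbf{x}^*_{LP}$ an optimal solution of $\mathbf{LP}_{\mathcal{I}}$; $\mathbf{x}^*_{AA}$ the output of: $\mathbf{x}^0=\mathbf{0}$, for $i=1..m$ (some $m\in\mathbb{N}$) $\mathbf{y}^i\in\arg\max_{\mathbf{x}\in\mathcal{P}}\langle\mathbf{x},\nabla f(\mathbf{x}^{i-1})\rangle$, $\mathbf{x}^i=\mathbf{x}^{i-1}+\mathbf{y}^i/m$, output $\mathbf{x}^m$; $\mathbf{x}^*_{SQ}$ built for $v=1,\dots,V$ in order, $(x^{SQ}_{v,s,t})_{s,t}$ optimal for $\max\sum_{t,s}\lambda_{s,t}\prod_{u<v}(1-p_{u,s}x^{SQ}_{u,s,t})p_{v,s}x_{v,s,t}$ s.t. $0\le x_{v,s,t}\le1$, $\sum_{\tau\le t}\sum_s\lambda_{s,\tau}x_{v,s,\tau}(1-G(t-\tau))\le1$ for all $t$; $\mathbf{x}^*\in\arg\max_{\mathbf{x}\in\{\mathbf{x}^*_{LP},\mathbf{x}^*_{AA},\mathbf{x}^*_{SQ}\}}f(\mathbf{x})$.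 SDN policy: set $\beta_{v,1}=1$ and $\beta_{v,t}=1-\sum_{t'=1}^{t-1}\sum_{s=1}^S\lambda_{s,t'}\frac{x^*_{v,s,t'}}{2-q}(1-G(t-t'))$ for $t\ge2$; when a task of type $s$ arrives at time $t$, notify each volunteer $v$ independently with probability $\frac{x^*_{v,s,t}}{(2-q)\beta_{v,t}}$. *)

(* Defs.v *)
From HB Require Import structures.
From mathcomp Require Import all_boot all_order all_algebra.
From mathcomp Require Import all_classical all_reals all_analysis.
Set Implicit Arguments. Unset Strict Implicit. Unset Printing Implicit Defensive.
Import Order.TTheory GRing.Theory Num.Theory.
Local Open Scope ring_scope.
Local Open Scope classical_set_scope.

Section VNP.
Variables (R : realType) (V S T : nat).
(* arrival probabilities lam s t, match probabilities p v s, pmf g on positive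
   integers (g 0 is never used). Times are naturals 1..T. *)
Variables (lam : 'I_S -> nat -> R) (p : 'I_V -> 'I_S -> R) (g : nat -> R).

(* vectors x_{v,s,t}; only entries with 1 <= t <= T are meaningful *)
Definition vec := 'I_V -> 'I_S -> nat -> R.

Definition Gcdf (tau : nat) : R := \sum_(1 <= i < tau.+1) g i.

(* discrete hazard rate g(tau)/(1-G(tau-1)) with 0/0 := 1 *)
Definition hazard (tau : nat) : R :=
  if 1 - Gcdf tau.-1 == 0 then 1 else g tau / (1 - Gcdf tau.-1).

Definition mdhr : R := inf [set hazard tau | tau in [set tau : nat | (0 < tau)%N]].

Definition feas1 (z : 'I_S -> nat -> R) : Prop :=
  (forall s t, (1 <= t <= T)%N -> 0 <= z s t <= 1) /\
  (forall t, (1 <= t <= T)%N ->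
     \sum_(1 <= tau < t.+1) \sum_(s < S) lam s tau * z s tau * (1 - Gcdf (t - tau)) <= 1).

Definition inP (x : vec) : Prop := forall v, feas1 (x v).

Definition lpobj (x : vec) : R :=
  \sum_(1 <= t < T.+1) \sum_(s < S) lam s t * Num.min (\sum_(v < V) x v s t * p v s) 1.

Definition LPval : R := sup [set lpobj x | x in [set x | inP x]].

Definition lp_optimal (x : vec) : Prop :=
  inP x /\ forall z, inP z -> lpobj z <= lpobj x.

Definition fobj (x : vec) : R :=
  \sum_(1 <= t < T.+1) \sum_(s < S) lam s t * (1 - \prod_(v < V) (1 - x v s t * p v s)).

(* gradient of f (partial derivative w.r.t. x_{v,s,t}) *)
Definition gradf (x : vec) : vec :=
  fun v s t => lam s t * p v s * \prod_(u < V | u != v) (1 - x u s t * p u s).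

Definition inner (x y : vec) : R :=
  \sum_(v < V) \sum_(s < S) \sum_(1 <= t < T.+1) x v s t * y v s t.

(* iterates x^i of the continuous-greedy procedure, given directions y^i *)
Fixpoint aa_seq (m : nat) (y : nat -> vec) (i : nat) : vec :=
  match i with
  | 0 => fun _ _ _ => 0
  | i'.+1 => fun v s t => aa_seq m y i' v s t + y i'.+1 v s t / m%:R
  end.

Definition aa_valid (m : nat) (y : nat -> vec) : Prop :=
  forall i, (1 <= i <= m)%N ->
    inP (y i) /\
    forall z, inP z -> inner z (gradf (aa_seq m y i.-1)) <= inner (y i) (gradf (aa_seq m y i.-1)).

Definition aa_output (m : nat) (y : nat -> vec) : vec := aa_seq m y m.

Definition sq_obj (xSQ : vec) (v : 'I_V) (z : 'I_S -> nat -> R) : R :=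
  \sum_(1 <= t < T.+1) \sum_(s < S)
     lam s t * (\prod_(u < V | (u < v)%N) (1 - p u s * xSQ u s t)) * p v s * z s t.

Definition sq_valid (xSQ : vec) : Prop :=
  forall v, feas1 (xSQ v) /\ forall z, feas1 z -> sq_obj xSQ v z <= sq_obj xSQ v (xSQ v).

Definition beta (q : R) (x : vec) (v : 'I_V) (t : nat) : R :=
  1 - \sum_(1 <= t' < t) \sum_(s < S) lam s t' * (x v s t' / (2 - q)) * (1 - Gcdf (t - t')).

Definition sdn_prob (q : R) (x : vec) : vec :=
  fun v s t => x v s t / ((2 - q) * beta q x v t).

(* Per-volunteer outcome in a period: None = not notified (or inactive);
   Some (r, k) = notified while active, responded iff r, and inter-activity
   time Z = k+1 truncated at T+1 (Z >= T+1 means never active again within the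
   horizon, probability 1 - G(T)). *)
Definition outcome := option (bool * 'I_T.+1).

Definition zw (k : 'I_T.+1) : R := if (k < T)%N then g k.+1 else 1 - Gcdf T.

(* st v = time at which v becomes active again; v active at t iff st v <= t *)
Definition ow (pi : vec) (s : 'I_S) (t : nat) (st : 'I_V -> nat) (v : 'I_V)
  (o : outcome) : R :=
  if (st v <= t)%N then
    match o with
    | None => 1 - pi v s t
    | Some (r, k) => pi v s t * (if r then p v s else 1 - p v s) * zw k
    end
  else (if o is None then 1 else 0).

Definition upd (t : nat) (st : 'I_V -> nat) (o : {ffun 'I_V -> outcome}) : 'I_V -> nat :=
  fun v => if (st v <= t)%N then
             (match o v with None => st v | Some (_, k) => (t + k.+1)%N end)
           else st v.

Definition completed (t : nat) (st : 'I_V -> nat) (o : {ffun 'I_V -> outcome}) : R :=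
  if [exists v, (st v <= t)%N && (if o v is Some (true, _) then true else false)]
  then 1 else 0.

Fixpoint polv (pi : vec) (n t : nat) (st : 'I_V -> nat) : R :=
  match n with
  | 0 => 0
  | n'.+1 =>
      \sum_(s < S) lam s t *
        \sum_(o : {ffun 'I_V -> outcome})
           (\prod_(v < V) ow pi s t st v (o v)) *
           (completed t st o + polv pi n' t.+1 (upd t st o))
      + (1 - \sum_(s < S) lam s t) * polv pi n' t.+1 st
  end.

Definition POL (pi : vec) : R := polv pi T 1 (fun _ => 0%N).

End VNP.

(* Main.v *)
Require Import Defs.
From HB Require Import structures.
From mathcomp Require Import all_boot all_order all_algebra.
From mathcomp Require Import all_classical all_reals all_analysis.
From mathcomp Require Import lra ring zify.
Import Order.TTheory GRing.Theory Num.Theory.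
Import numFieldNormedType.Exports.
Local Open Scope classical_set_scope.
Local Open Scope ring_scope.
Section G.
Variables (R : realType) (g : nat -> R).
Hypothesis hg0 : forall i, (0 < i)%N -> 0 <= g i.
Hypothesis hg1 : Gcdf g n @[n --> \oo] --> (1 : R).

Lemma GS n : Gcdf g n.+1 = Gcdf g n + g n.+1.
Proof. by rewrite /Gcdf big_nat_recr. Qed.

Lemma G0 : Gcdf g 0 = 0.
Proof. by rewrite /Gcdf big_geq. Qed.

Lemma G_homo : {homo Gcdf g : n m / (n <= m)%N >-> n <= m}.
Proof.
apply/nondecreasing_seqP => n; rewrite GS lerDl; exact: hg0.
Qed.

Lemma G_le1 n : Gcdf g n <= 1.
Proof.
have := nondecreasing_cvgn_le G_homo (cvgP _ hg1) n.
by rewrite (cvg_lim _ hg1).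
Qed.

Lemma hazard_ge0 k : (0 < k)%N -> 0 <= hazard g k.
Proof.
move=> k0; rewrite /hazard; case: eqP => // H.
apply: divr_ge0; first exact: hg0.
by rewrite subr_ge0 G_le1.
Qed.

Lemma mdhr_le k : (0 < k)%N -> mdhr g <= hazard g k.
Proof.
move=> k0; apply: ge_inf; last by exists k.
by exists 0 => _ [j j0 <-]; exact: hazard_ge0.
Qed.


Lemma mdhr_le1 : mdhr g <= 1.
Proof.
have h1 := mdhr_le 1 (ltn0Sn 0). apply: (le_trans h1).
rewrite /hazard /= G0 subr0 oner_eq0 divr1.
by have := G_le1 1; rewrite GS G0 add0r.
Qed.

Lemma G_key k : 1 - Gcdf g k.+1 <= (1 - mdhr g) * (1 - Gcdf g k).
Proof.
have := (@mdhr_le (k.+1) (ltn0Sn k)); rewrite /hazard /= GS.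
have gk := @hg0 k.+1 (ltn0Sn k).
case: eqP => H hq.
  rewrite H mulr0; lra.
have pos : 0 < 1 - Gcdf g k by rewrite lt_neqAle eq_sym; apply/andP; split;
  [apply/eqP | rewrite subr_ge0 G_le1].
rewrite ler_pdivlMr // in hq.
rewrite mulrBl mul1r; lra.
Qed.

End G.

Section Main.
Variables (R : realType) (V S T : nat) (lam : 'I_S -> nat -> R)
  (p : 'I_V -> 'I_S -> R) (g : nat -> R).
Hypothesis hlam0 : forall s t, (1 <= t <= T)%N -> 0 <= lam s t.
Hypothesis hlam1 : forall t, (1 <= t <= T)%N -> \sum_(s < S) lam s t <= 1.
Hypothesis hp : forall v s, 0 <= p v s <= 1.
Hypothesis hg0 : forall i, (0 < i)%N -> 0 <= g i.
Hypothesis hg1 : Gcdf g n @[n --> \oo] --> (1 : R).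

Lemma aa_seqE m (y : nat -> vec R V S) i v s t :
  aa_seq m y i v s t = \sum_(1 <= j < i.+1) y j v s t / m%:R.
Proof.
elim: i => [|i IH]; first by rewrite big_geq.
by rewrite /= IH [in RHS]big_nat_recr.
Qed.

Lemma aa_feas m (y : nat -> vec R V S) :
  (forall j, (1 <= j <= m)%N -> inP T lam g (y j)) ->
  inP T lam g (aa_output m y).
Proof.
move=> hy v; rewrite /aa_output.
case: m hy => [|m] hy.
  split.
    by move=> s t _; rewrite aa_seqE big_geq // lexx ler01.
  move=> t _; rewrite big1 ?ler01 // => tau _; rewrite big1 // => s _.
  by rewrite aa_seqE big_geq // mulr0 mul0r.
have m0 : (0 < m.+1%:R :> R) by rewrite ltr0n.
split.
  move=> s t ht; rewrite aa_seqE; apply/andP; split.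
    rewrite big_nat_cond; apply: sumr_ge0 => j /andP[hj _]; apply: divr_ge0 => //.
    by have [/(_ s t ht) /andP[]] := hy j hj v.
  apply: (@le_trans _ _ (\sum_(1 <= j < m.+2) (m.+1%:R)^-1)).
    apply: ler_sum_nat => j hj; rewrite ler_pdivrMr // mulVf ?gt_eqF //.
    by have [/(_ s t ht) /andP[]] := hy j hj v.
  by rewrite sumr_const_nat subn1 /= -[X in X *+ _]mulr1 -mulrnAr mulVf ?gt_eqF.
move=> t ht.
have -> : \sum_(1 <= tau < t.+1) \sum_(s < S)
     lam s tau * aa_seq m.+1 y m.+1 v s tau * (1 - Gcdf g (t - tau)) =
   \sum_(1 <= j < m.+2) (m.+1%:R)^-1 * (\sum_(1 <= tau < t.+1) \sum_(s < S)
     lam s tau * y j v s tau * (1 - Gcdf g (t - tau))).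
  under eq_bigr => tau _ do under eq_bigr => s _ do
    rewrite aa_seqE mulr_sumr mulr_suml.
  under eq_bigr => tau _ do rewrite exchange_big /=.
  rewrite exchange_big /=; apply: eq_bigr => j _; rewrite mulr_sumr.
  apply: eq_bigr => tau _; rewrite mulr_sumr; apply: eq_bigr => s _.
  by ring.
apply: (@le_trans _ _ (\sum_(1 <= j < m.+2) (m.+1%:R)^-1)).
  apply: ler_sum_nat => j hj; rewrite -[X in _ <= X]mulr1.
  apply: ler_wpM2l; first by rewrite invr_ge0 ltW.
  by have [_ /(_ t ht)] := hy j hj v.
by rewrite sumr_const_nat subn1 /= -[X in X *+ _]mulr1 -mulrnAr mulVf ?gt_eqF.
Qed.


Variable x : vec R V S.
Hypothesis Hx : inP T lam g x.

Local Notation q := (mdhr g).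

Lemma q_le1 : q <= 1.
Proof. exact: (@mdhr_le1 R g hg0 hg1). Qed.

Lemma twoq_ge1 : 1 <= 2 - q.
Proof. have := q_le1; lra. Qed.

Lemma twoq_neq0 : 2 - q != 0.
Proof. by apply: lt0r_neq0; have := twoq_ge1; lra. Qed.

Lemma x01 v s {t} : (1 <= t <= T)%N -> 0 <= x v s t <= 1.
Proof. by move=> ht; have [/(_ s t ht)] := Hx v. Qed.

Lemma beta_ge v {t} : (1 <= t <= T)%N -> 1 <= (2 - q) * beta lam g q x v t.
Proof.
move=> ht; rewrite /beta mulrBr mulr1.
have -> : (2 - q) * \sum_(1 <= t' < t) \sum_(s < S)
    lam s t' * (x v s t' / (2 - q)) * (1 - Gcdf g (t - t')) =
  \sum_(1 <= t' < t) \sum_(s < S) lam s t' * x v s t' * (1 - Gcdf g (t - t')).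
  rewrite mulr_sumr; apply: eq_bigr => t' _; rewrite mulr_sumr.
  apply: eq_bigr => s _; field; exact: twoq_neq0.
suff : \sum_(1 <= t' < t) \sum_(s < S) lam s t' * x v s t' * (1 - Gcdf g (t - t'))
   <= 1 - q by lra.
case: t ht => [//|t0] /andP[_ ht].
case: t0 ht => [|t0] ht.
  by rewrite big_geq //; have := q_le1; lra.
apply: (@le_trans _ _ ((1 - q) * \sum_(1 <= t' < t0.+2) \sum_(s < S)
   lam s t' * x v s t' * (1 - Gcdf g (t0.+1 - t')))).
  rewrite mulr_sumr; apply: ler_sum_nat => t' /andP[t1 t2].
  rewrite mulr_sumr; apply: ler_sum => s _.
  have ht' : (1 <= t' <= T)%N by rewrite t1 /=; apply: leq_trans ht; rewrite ltnW.
  rewrite mulrCA; apply: ler_wpM2l.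
    by apply: mulr_ge0; [exact: hlam0 | have /andP[] := x01 v s ht'].
  by rewrite subSn // G_key.
have hq := q_le1.
rewrite -[X in _ <= X]mulr1; apply: ler_wpM2l; first by lra.
by have [_ /(_ t0.+1)] := Hx v; apply; rewrite /= ltnW.
Qed.

Lemma beta_gt0 v {t} : (1 <= t <= T)%N -> 0 < beta lam g q x v t.
Proof.
move=> ht; have := beta_ge v ht; have := twoq_ge1 => h1 h2.
rewrite -(pmulr_rgt0 _ (_ : 0 < 2 - q)); last by lra.
by lra.
Qed.

Lemma sdn_01 v s {t} : (1 <= t <= T)%N ->
  0 <= sdn_prob lam g q x v s t <= x v s t.
Proof.
move=> ht; rewrite /sdn_prob.
have hD := beta_ge v ht; have [x0 x1] := andP (x01 v s ht).
have D0 : 0 < (2 - q) * beta lam g q x v t by lra.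
apply/andP; split; first exact: divr_ge0 (ltW D0).
rewrite ler_pdivrMr //; rewrite -[X in X <= _]mulr1; exact: ler_wpM2l.
Qed.

Lemma sdn_le1 v s {t} : (1 <= t <= T)%N -> sdn_prob lam g q x v s t <= 1.
Proof.
move=> ht; have /andP[_ h] := sdn_01 v s ht; have /andP[_ h'] := x01 v s ht.
exact: le_trans h h'.
Qed.

Lemma sdn_beta v s {t} : (1 <= t <= T)%N ->
  sdn_prob lam g q x v s t * beta lam g q x v t = x v s t / (2 - q).
Proof.
move=> ht; rewrite /sdn_prob; have := beta_gt0 v ht => b0.
field; apply/andP; split; [exact: twoq_neq0 | exact: lt0r_neq0].
Qed.


Lemma sum_outcome (F : outcome T -> R) :
  \sum_(o : outcome T) F o = F None + \sum_(b : bool) \sum_(k : 'I_T.+1) F (Some (b, k)).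
Proof.
rewrite (bigD1 None) //=; congr (_ + _).
rewrite (reindex_onto (fun bk : bool * 'I_T.+1 => Some bk)
   (fun o => odflt (true, ord0) o)) /=; last by case.
rewrite pair_big /=; apply: eq_big => [[b k]|[b k] _] //=.
by rewrite eqxx.
Qed.

Lemma zw_sum : \sum_(k : 'I_T.+1) zw g k = 1.
Proof.
rewrite big_ord_recr /= /zw /= ltnn.
have -> : \sum_(i < T) (if (widen_ord (leqnSn T) i < T)%N then g (widen_ord (leqnSn T) i).+1 else 1 - Gcdf g T)
   = \sum_(i < T) g i.+1 by apply: eq_bigr => i _; rewrite /= ltn_ord.
by rewrite /Gcdf big_add1 /= big_mkord addrC subrK.
Qed.

Lemma zw_ge0 (k : 'I_T.+1) : 0 <= zw g k.
Proof.
rewrite /zw; case: ifP => _; first exact: hg0.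
by rewrite subr_ge0 (@G_le1 R g hg0 hg1).
Qed.

Lemma marg (F h : 'I_V -> outcome T -> R) :
  (forall v, \sum_a F v a = 1) ->
  \sum_(o : {ffun 'I_V -> outcome T}) (\prod_v F v (o v)) * \sum_u h u (o u) =
  \sum_u \sum_a F u a * h u a.
Proof.
move=> F1.
under eq_bigr do rewrite mulr_sumr.
rewrite exchange_big /=; apply: eq_bigr => u _.
have E : forall o : {ffun 'I_V -> outcome T}, \prod_v F v (o v) * h u (o u) =
   \prod_v (if v == u then F v (o v) * h v (o v) else F v (o v)).
  move=> o; rewrite (bigD1 u) //= [RHS](bigD1 u) //= eqxx mulrAC; congr (_ * _).
  by apply: eq_bigr => v /negbTE ->.
under eq_bigr do rewrite E.
rewrite -(bigA_distr_bigA (fun v a => if v == u then F v a * h v a else F v a)).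
rewrite (bigD1 u) //= [X in _ * X]big1 ?mulr1; last first.
  by move=> v /negbTE vu; under eq_bigr do rewrite vu; exact: F1.
by apply: eq_bigr => a _; rewrite eqxx.
Qed.

Lemma prod_widen n (F : 'I_n.+1 -> R) (v : nat) : (v <= n)%N ->
  \prod_(u < n.+1 | (u < v)%N) F u = \prod_(u < n | (u < v)%N) F (widen_ord (leqnSn n) u).
Proof.
move=> vn; rewrite big_mkcond big_ord_recr /= ltnNge vn /= mulr1 -big_mkcond.
by [].
Qed.

Lemma telescope n (z : 'I_n -> R) :
  1 - \prod_(v < n) (1 - z v) = \sum_(v < n) z v * \prod_(u < n | (u < v)%N) (1 - z u).
Proof.
elim: n z => [|n IH] z; first by rewrite !big_ord0 subrr.
rewrite big_ord_recr [RHS]big_ord_recr /=.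
have -> : \prod_(u < n.+1 | (u < n)%N) (1 - z u) =
    \prod_(i < n) (1 - z (widen_ord (leqnSn n) i)).
  by rewrite prod_widen //; apply: eq_bigl => i; rewrite ltn_ord.
have -> : \sum_(i < n) z (widen_ord (leqnSn n) i) *
   \prod_(u < n.+1 | (u < widen_ord (leqnSn n) i)%N) (1 - z u) =
   \sum_(i < n) z (widen_ord (leqnSn n) i) *
   \prod_(u < n | (u < i)%N) (1 - z (widen_ord (leqnSn n) u)).
  by apply: eq_bigr => i _; rewrite prod_widen // ltnW //=.
rewrite -(IH (fun i => z (widen_ord (leqnSn n) i))).
by ring.
Qed.

Lemma prod_lb n (a c : 'I_n -> R) :
  (forall v, 0 <= a v <= 1) -> (forall v, 0 <= c v <= 1) ->
  \sum_v a v * c v * \prod_(u < n | (u < v)%N) (1 - c u) <=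
  1 - \prod_v (1 - a v * c v).
Proof.
move=> ha hc; rewrite telescope; apply: ler_sum => v _.
have [a0 a1] := andP (ha v); have [c0 c1] := andP (hc v).
apply: ler_wpM2l; first exact: mulr_ge0.
apply: ler_prod => u _; have [a0' a1'] := andP (ha u); have [c0' c1'] := andP (hc u).
apply/andP; split; first by lra.
have : a u * c u <= c u by rewrite -[X in _ <= X]mul1r; apply: ler_wpM2r.
lra.
Qed.


Section StepA.
Variable pi : vec R V S.
Hypothesis Hpi : forall v s t, (1 <= t <= T)%N -> 0 <= pi v s t <= 1.

Definition cc v s t := pi v s t * p v s.
Definition DD v s t := \prod_(u < V | (u < v)%N) (1 - cc u s t).
Definition rr v t := \sum_(s < S) lam s t * cc v s t * DD v s t.
Definition upd1 (t a : nat) (o : outcome T) : nat :=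
  if (a <= t)%N then match o with None => a | Some (_, k) => (t + k.+1)%N end else a.
Definition ow1 v s t a (o : outcome T) := ow p g pi s t (fun _ => a) v o.
Definition Ex1 v t a (f : nat -> R) :=
  \sum_(s < S) lam s t * \sum_(o : outcome T) ow1 v s t a o * f (upd1 t a o)
  + (1 - \sum_(s < S) lam s t) * f a.
Fixpoint W v n t a := match n with 0 => 0 | n'.+1 =>
  (if (a <= t)%N then rr v t else 0) + Ex1 v t a (W v n' t.+1) end.

Lemma cc01 v s t : (1 <= t <= T)%N -> 0 <= cc v s t <= 1.
Proof.
move=> ht; have [a0 a1] := andP (Hpi v s t ht); have [p0 p1] := andP (hp v s).
rewrite /cc; apply/andP; split; first exact: mulr_ge0.
by rewrite -(mulr1 1); apply: ler_pM.
Qed.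

Lemma ow1_sum v s t a : \sum_o ow1 v s t a o = 1.
Proof.
rewrite sum_outcome /ow1 /ow; case: (a <= t)%N.
  rewrite big_bool /= -!mulr_sumr !zw_sum; ring.
by rewrite big1 ?addr0 // => b _; rewrite big1.
Qed.

Lemma ow1_ge0 v s t a o : (1 <= t <= T)%N -> 0 <= ow1 v s t a o.
Proof.
move=> ht; have [a0 a1] := andP (Hpi v s t ht); have [p0 p1] := andP (hp v s).
rewrite /ow1 /ow; case: (a <= t)%N; case: o => [[b k]|] //=.
- apply: mulr_ge0; last exact: zw_ge0.
  by apply: mulr_ge0 => //; case: b; lra.
- by lra.
Qed.


Definition resp (a : outcome T) : bool := if a is Some (true, _) then true else false.

Lemma completedE t st (o : {ffun 'I_V -> outcome T}) :
  completed R t st o = 1 - \prod_v (1 - ((st v <= t)%N && resp (o v))%:R).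
Proof.
rewrite /completed; case: existsP => [[v /andP[h1 h2]]|H].
  by rewrite (bigD1 v) //= h1 /resp h2 /= subrr mul0r subr0.
rewrite big1 ?subrr // => v _.
have /negbTE -> : ~~ ((st v <= t)%N && resp (o v)).
  by apply/negP => h; apply: H; exists v.
by rewrite subr0.
Qed.

Lemma Ecompleted s t st : (1 <= t <= T)%N ->
  \sum_(o : {ffun 'I_V -> outcome T}) (\prod_v ow p g pi s t st v (o v)) * completed R t st o
  = 1 - \prod_v (1 - (st v <= t)%N%:R * cc v s t).
Proof.
move=> ht.
have E : forall o : {ffun 'I_V -> outcome T},
    (\prod_v ow p g pi s t st v (o v)) * completed R t st o =
    \prod_v ow p g pi s t st v (o v) - \prod_v (ow p g pi s t st v (o v) *
      (1 - ((st v <= t)%N && resp (o v))%:R)).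
  by move=> o; rewrite completedE mulrBr mulr1 big_split.
rewrite (eq_bigr _ (fun o _ => E o)).
rewrite sumrB -(bigA_distr_bigA (fun v a => ow p g pi s t st v a)).
rewrite -(bigA_distr_bigA (fun v a => ow p g pi s t st v a *
   (1 - ((st v <= t)%N && resp a)%:R))).
rewrite big1; last by move=> v _; exact: (ow1_sum v s t (st v)).
congr (_ - _); apply: eq_bigr => v _.
rewrite sum_outcome /ow /resp; case: (st v <= t)%N => /=.
  rewrite big_bool /= big1; last by move=> k _; rewrite subrr mulr0.
  under eq_bigr do rewrite subr0 mulr1.
  by rewrite -mulr_sumr zw_sum /cc; ring.
by rewrite big1 => [|b _]; [rewrite /=; ring | rewrite big1 // => k _; rewrite mul0r].
Qed.

Definition nu v t := \sum_(s < S) lam s t * pi v s t.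

Lemma Ex1_act v t a f : (a <= t)%N -> Ex1 v t a f =
  (1 - nu v t) * f a + nu v t * \sum_(k < T.+1) zw g k * f (t + k.+1)%N.
Proof.
move=> ha; rewrite /Ex1 /ow1 /ow /upd1 ha.
under eq_bigr => s _ do rewrite sum_outcome big_bool /= -big_split /=.
have E : forall s, lam s t * ((1 - pi v s t) * f a + \sum_(i < T.+1)
   (pi v s t * p v s * zw g i * f (t + i.+1)%N +
    pi v s t * (1 - p v s) * zw g i * f (t + i.+1)%N)) =
   lam s t * f a - (lam s t * pi v s t) * f a +
   (lam s t * pi v s t) * \sum_(k < T.+1) zw g k * f (t + k.+1)%N.
  move=> s; rewrite mulrDr; congr (_ + _); first by ring.
  by rewrite !mulr_sumr; apply: eq_bigr => k _; ring.
under eq_bigr => s _ do rewrite E.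
rewrite big_split /= sumrB -!mulr_suml /nu; ring.
Qed.

Lemma Ex1_inact v t a f : (t < a)%N -> Ex1 v t a f = f a.
Proof.
move=> ha; rewrite /Ex1 /ow1 /ow /upd1 leqNgt ha /=.
have E : forall s, lam s t * \sum_(o : outcome T) (match o with Some _ => 0 | None => 1 end) * f a = lam s t * f a.
  move=> s; rewrite sum_outcome big_bool /= !big1 ?addr0 ?mul1r // => k _; by rewrite mul0r.
under eq_bigr => s _ do rewrite E.
by rewrite -mulr_suml; ring.
Qed.

Lemma W_act v n t a : (a <= t)%N -> W v n t a = W v n t t.
Proof.
elim: n t a => [//|n IH] t a ha /=; rewrite ha leqnn !Ex1_act ?leqnn //.
by rewrite (IH t.+1 a) ?(IH t.+1 t) // ltnW.
Qed.

Lemma W_late v n t a : (t + n <= a)%N -> W v n t a = 0.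
Proof.
elim: n t a => [//|n IH] t a ha /=.
have ta : (t < a)%N by apply: leq_trans ha; rewrite -addn1 leq_add2l.
rewrite leqNgt ta Ex1_inact // add0r IH //; by rewrite addSnnS.
Qed.

Lemma W_inact v n t a : (t < a)%N -> W v n.+1 t a = W v n t.+1 a.
Proof. by move=> ta /=; rewrite leqNgt ta Ex1_inact // add0r. Qed.


Lemma polv_ge n t st : (1 <= t)%N -> (t + n <= T.+1)%N ->
  \sum_v W v n t (st v) <= polv T lam p g pi n t st.
Proof.
elim: n t st => [|n IH] t st t1 tn; first by rewrite big1.
have htT : (1 <= t <= T)%N by apply/andP; split; lia.
have IH' : forall st', \sum_v W v n t.+1 (st' v) <= polv T lam p g pi n t.+1 st'.
  by move=> st'; apply: IH; lia.
have LE : \sum_v W v n.+1 t (st v) =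
  \sum_(s < S) lam s t * (\sum_v (st v <= t)%N%:R * cc v s t * DD v s t +
     \sum_v \sum_(o : outcome T) ow1 v s t (st v) o * W v n t.+1 (upd1 t (st v) o))
  + (1 - \sum_(s < S) lam s t) * \sum_v W v n t.+1 (st v).
  rewrite /= big_split /= /Ex1 big_split /= -mulr_sumr addrA; congr (_ + _).
  under [RHS]eq_bigr do rewrite mulrDr.
  rewrite big_split /=; congr (_ + _).
    rewrite (eq_bigr (fun v => \sum_(s < S) lam s t * ((st v <= t)%N%:R * cc v s t * DD v s t))).
      by rewrite exchange_big /=; apply: eq_bigr => s _; rewrite mulr_sumr.
    move=> v _; case: (st v <= t)%N; rewrite /rr.
      by apply: eq_bigr => s _; rewrite mul1r mulrA.
    by rewrite big1 // => s _; rewrite !mul0r mulr0.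
  by rewrite exchange_big /=; apply: eq_bigr => s _; rewrite mulr_sumr.
rewrite LE /=; apply: lerD.
  apply: ler_sum => s _; apply: ler_wpM2l; first exact: hlam0.
  under [X in _ <= X]eq_bigr do rewrite mulrDr.
  rewrite big_split /=; apply: lerD.
    rewrite Ecompleted //; apply: prod_lb => v; last exact: cc01.
    by case: (st v <= t)%N; rewrite ?lexx ?ler01.
  rewrite -(marg (fun v a => ow1 v s t (st v) a)
     (fun v a => W v n t.+1 (upd1 t (st v) a))); last by move=> v; exact: ow1_sum.
  apply: ler_sum => o _; apply: ler_wpM2l; last exact: IH'.
  by apply: prodr_ge0 => v _; exact: ow1_ge0.
apply: ler_wpM2l; last exact: IH'.
by have := hlam1 t htT; lra.
Qed.

End StepA.


Local Notation pis := (sdn_prob lam g q x).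
Local Notation bt := (beta lam g q x).

Lemma Hpis v s t : (1 <= t <= T)%N -> 0 <= pis v s t <= 1.
Proof.
move=> ht; have /andP[h0 _] := sdn_01 v s ht.
by rewrite h0 (sdn_le1 v s ht).
Qed.

Definition ww v t := \sum_(s < S) lam s t * (x v s t / (2 - q)).

Lemma beta_ww v t : bt v t = 1 - \sum_(1 <= t' < t) ww v t' * (1 - Gcdf g (t - t')).
Proof. by rewrite /beta; congr (1 - _); apply: eq_bigr => t' _; rewrite /ww mulr_suml. Qed.

Lemma beta_rec v s : (1 <= s)%N ->
  bt v s.+1 = bt v s - ww v s + \sum_(1 <= t < s.+1) ww v t * g (s.+1 - t).
Proof.
move=> s1; rewrite !beta_ww big_nat_recr //= [in RHS]big_nat_recr //=.
have E : \sum_(1 <= t < s) ww v t * (1 - Gcdf g (s.+1 - t)) =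
   \sum_(1 <= t < s) ww v t * (1 - Gcdf g (s - t)) -
   \sum_(1 <= t < s) ww v t * g (s.+1 - t).
  rewrite -sumrB; apply: eq_big_nat => t /andP[_ ts].
  by rewrite subSn ?(ltnW ts) // GS; ring.
by rewrite E subSnn GS G0 add0r; ring.
Qed.

Lemma nu_beta v {t} : (1 <= t <= T)%N -> nu pis v t * bt v t = ww v t.
Proof.
move=> ht; rewrite /nu mulr_suml; apply: eq_bigr => s _.
by rewrite -mulrA sdn_beta.
Qed.

Definition sig v s a := \sum_(1 <= t < s) ww v t * g (a - t).

Definition Phi v s := bt v s * W pis v (T.+1 - s) s s +
  \sum_(s.+1 <= a < T.+1) sig v s a * W pis v (T.+1 - s) s a +
  \sum_(1 <= t < s) rr pis v t * bt v t.

Lemma zsum_shift v n s : (T - s = n)%N -> (1 <= s <= T)%N ->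
  \sum_(k < T.+1) zw g k * W pis v n s.+1 (s + k.+1)%N =
  \sum_(s.+1 <= a < T.+1) g (a - s) * W pis v n s.+1 a.
Proof.
move=> hn hs.
rewrite (eq_bigr (fun k : 'I_T.+1 => if (k < n)%N then g k.+1 * W pis v n s.+1 (s + k.+1)%N else 0)); last first.
  move=> k _; case: ifP => kn.
    by rewrite /zw ifT //; lia.
  by rewrite W_late ?mulr0 //; lia.
rewrite -(big_mkord xpredT (fun k => if (k < n)%N then g k.+1 * W pis v n s.+1 (s + k.+1)%N else 0)).
rewrite -big_mkcond /=.
rewrite [in RHS](_ : s.+1 = 0 + s.+1)%N // big_addn.
have -> : (T.+1 - s.+1 = n)%N by lia.
rewrite [in RHS](@big_nat_widen _ _ _ 0 n T.+1); last by lia.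
apply: eq_big => // k _; congr (g _ * W _ _ _ _ _); lia.
Qed.

Lemma Phi_step v s : (1 <= s <= T)%N -> Phi v s = Phi v s.+1.
Proof.
move=> hs; have [s1 sT] := andP hs.
set n := (T - s)%N.
have e1 : (T.+1 - s = n.+1)%N by rewrite /n; lia.
have e2 : (T.+1 - s.+1 = n)%N by rewrite /n; lia.
rewrite /Phi e1 e2 /= leqnn Ex1_act // (W_act pis v n s.+1 s (leqnSn s)) zsum_shift //.
rewrite (big_nat_recr _ _ _ s1) /=.
have -> : \sum_(s.+1 <= a < T.+1) sig v s a * W pis v n.+1 s a =
   \sum_(s.+1 <= a < T.+1) sig v s a * W pis v n s.+1 a.
  by apply: eq_big_nat => a /andP[sa _]; rewrite W_inact.
have -> : \sum_(s.+2 <= a < T.+1) sig v s.+1 a * W pis v n s.+1 a =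
   \sum_(s.+2 <= a < T.+1) sig v s a * W pis v n s.+1 a +
   ww v s * \sum_(s.+2 <= a < T.+1) g (a - s) * W pis v n s.+1 a.
  rewrite mulr_sumr -big_split /=; apply: eq_big_nat => a _.
  by rewrite /sig big_nat_recr //=; ring.
rewrite -(nu_beta v hs) (beta_rec v s s1).
case: (ltnP s T) => sT'.
  rewrite !(big_ltn (_ : s.+1 < T.+1)%N) //= subSnn.
  rewrite (@big_nat_recr _ _ _ s 1 (fun t => ww v t * g (s.+1 - t)) s1) /= subSnn.
  rewrite -(nu_beta v hs) /sig; ring.
have sTe : s = T by apply/eqP; rewrite eqn_leq sT sT'.
have E0 : forall m (F : nat -> R), (T.+1 <= m)%N -> \sum_(m <= a < T.+1) F a = 0.
  by move=> m F hm; rewrite big_geq.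
rewrite !E0 ?sTe //.
rewrite /n sTe subnn /=; ring.
Qed.


Lemma Phi_1 v : Phi v 1 = W pis v T 1 0.
Proof.
rewrite /Phi subSS subn0 /beta big_geq // subr0 mul1r [X in _ + X]big_geq // addr0.
rewrite big1 ?addr0; last by move=> a _; rewrite /sig big_geq // mul0r.
by rewrite (W_act pis v T 1 0).
Qed.

Lemma Phi_end v : Phi v T.+1 = \sum_(1 <= t < T.+1) rr pis v t * bt v t.
Proof. by rewrite /Phi subnn /= mulr0 add0r big_geq // add0r. Qed.

Lemma W_total v : W pis v T 1 0 = \sum_(1 <= t < T.+1) rr pis v t * bt v t.
Proof.
suff H : forall k, (k <= T)%N -> Phi v 1 = Phi v k.+1.
  by rewrite -Phi_1 -Phi_end; apply: H.
elim => [//|k IH] hk; rewrite IH ?(ltnW hk) //; apply: Phi_step.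
by rewrite ltn0Sn.
Qed.

Lemma sum_rr_bt t : (1 <= t <= T)%N ->
  (2 - q)^-1 * \sum_(s < S) lam s t * (1 - \prod_(v < V) (1 - x v s t * p v s))
  <= \sum_v rr pis v t * bt v t.
Proof.
move=> ht; rewrite /rr.
under [X in _ <= X]eq_bigr do rewrite mulr_suml.
rewrite exchange_big mulr_sumr /=; apply: ler_sum => s _.
rewrite (@telescope V (fun v => x v s t * p v s)) !mulr_sumr; apply: ler_sum => v _.
have E : lam s t * cc pis v s t * DD pis v s t * bt v t =
   (2 - q)^-1 * (lam s t * (x v s t * p v s * DD pis v s t)).
  have h := sdn_beta v s ht; rewrite /cc.
  transitivity (lam s t * p v s * DD pis v s t * (pis v s t * bt v t)); first by ring.
  by rewrite h; ring.
rewrite E; apply: ler_wpM2l; first by rewrite invr_ge0; have := twoq_ge1; lra.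
apply: ler_wpM2l; first exact: hlam0.
have [x0 x1] := andP (x01 v s ht); have [p0 p1] := andP (hp v s).
apply: ler_wpM2l; first exact: mulr_ge0.
apply: ler_prod => u _.
have [x0' x1'] := andP (x01 u s ht); have [p0' p1'] := andP (hp u s).
have [s0 s1] := andP (sdn_01 u s ht).
have h1 : x u s t * p u s <= 1 by rewrite -(mulr1 1); apply: ler_pM.
have h2 : pis u s t * p u s <= x u s t * p u s by apply: ler_wpM2r.
rewrite /cc; apply/andP; split; lra.
Qed.

Lemma POL_ge : (2 - q)^-1 * fobj T lam p x <= POL T lam p g pis.
Proof.
rewrite /POL.
have := @polv_ge pis Hpis T 1 (fun _ => 0%N) (leqnn 1) (leqnn _).
apply: le_trans.
under eq_bigr do rewrite W_total.
rewrite exchange_big /fobj mulr_sumr /=; apply: ler_sum_nat => t ht.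
exact: sum_rr_bt.
Qed.

End Main.

Lemma e_bound (R : realType) n (z : 'I_n -> R) : (forall v, 0 <= z v <= 1) ->
  (1 - (expR 1)^-1) * Num.min (\sum_v z v) 1 <= 1 - \prod_v (1 - z v).
Proof.
move=> hz.
have P : \prod_v (1 - z v) <= expR (- \sum_v z v).
  rewrite -sumrN expR_sum; apply: ler_prod => v _.
  have [z0 z1] := andP (hz v); apply/andP; split; first by lra.
  by have := expR_ge1Dx (- z v); lra.
have y0 : 0 <= \sum_v z v by apply: sumr_ge0 => v _; have /andP[] := hz v.
move: P y0; set y := \sum_v z v => P y0.
have e1 : (expR (-1) = (expR 1)^-1 :> R) by rewrite expRN.
suff : (1 - (expR 1)^-1) * Num.min y 1 <= 1 - expR (- y) by lra.
rewrite minEle; case: ifP => hy.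
  have := convex_expR (Itv01 y0 hy) (-1) 0.
  rewrite !convRE /= /unstable.onem expR0 mulr0 addr0 mulrN1 -e1.
  by move=> h; nra.
have hy' : 1 <= y by rewrite leNgt; apply/negP => h; move/negP: hy; apply; rewrite ltW.
have : expR (- y) <= expR (-1) by rewrite ler_expR lerN2.
by rewrite e1 mulr1; lra.
Qed.

Lemma LP_bound (R : realType) (V S T : nat)
  (lam : 'I_S -> nat -> R) (p : 'I_V -> 'I_S -> R) (g : nat -> R)
  (hlam0 : forall s t, (1 <= t <= T)%N -> 0 <= lam s t)
  (hp : forall v s, 0 <= p v s <= 1) (xLP : vec R V S)
  (hLP : lp_optimal T lam p g xLP) :
  (1 - (expR 1)^-1) * LPval T lam p g <= fobj T lam p xLP.
Proof.
have e0 : 0 <= 1 - (expR 1)^-1 :> R.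
  by rewrite subr_ge0 ltW // invf_lt1 ?expR_gt0 // expR_gt1.
apply: (@le_trans _ _ ((1 - (expR 1)^-1) * lpobj T lam p xLP)).
  apply: ler_wpM2l => //; apply: ge_sup; first by exists (lpobj T lam p xLP), xLP; first exact: hLP.1.
  by move=> _ [z hz <-]; exact: hLP.2.
rewrite /lpobj /fobj mulr_sumr; apply: ler_sum_nat => t ht.
rewrite mulr_sumr; apply: ler_sum => s _; rewrite mulrCA; apply: ler_wpM2l.
  exact: hlam0.
apply: e_bound => v; have [/(_ s t ht) /andP[x0 x1] _] := hLP.1 v.
have [p0 p1] := andP (hp v s).
by rewrite mulr_ge0 //= -(mulr1 1); apply: ler_pM.
Qed.

Theorem theorem3 (R : realType) (V S T : nat)
  (lam : 'I_S -> nat -> R) (p : 'I_V -> 'I_S -> R) (g : nat -> R)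
  (hlam0 : forall s t, (1 <= t <= T)%N -> 0 <= lam s t)
  (hlam1 : forall t, (1 <= t <= T)%N -> \sum_(s < S) lam s t <= 1)
  (hp : forall v s, 0 <= p v s <= 1)
  (hg0 : forall i, (0 < i)%N -> 0 <= g i)
  (hg1 : Gcdf g n @[n --> \oo] --> (1 : R))
  (xLP : vec R V S) (hLP : lp_optimal T lam p g xLP)
  (m : nat) (y : nat -> vec R V S) (hAA : aa_valid T lam p g m y)
  (xSQ : vec R V S) (hSQ : sq_valid T lam p g xSQ)
  (xstar : vec R V S)
  (hstar : xstar = xLP \/ xstar = aa_output m y \/ xstar = xSQ)
  (hmax : fobj T lam p xLP <= fobj T lam p xstar /\
          fobj T lam p (aa_output m y) <= fobj T lam p xstar /\
          fobj T lam p xSQ <= fobj T lam p xstar) :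
  (2 - mdhr g)^-1 * (1 - (expR 1)^-1) * LPval T lam p g
    <= POL T lam p g (sdn_prob lam g (mdhr g) xstar).
Proof.
have Hx : inP T lam g xstar.
  case: hstar => [->|[->|->]].
  - exact: hLP.1.
  - by apply: aa_feas => j hj; have [] := hAA j hj.
  - by move=> v; have [] := hSQ v.
have h1 := @POL_ge R V S T lam p g hlam0 hlam1 hp hg0 hg1 xstar Hx.
have h2 := @LP_bound R V S T lam p g hlam0 hp xLP hLP.
have q1 := @mdhr_le1 R g hg0 hg1.
apply: le_trans h1; rewrite -mulrA; apply: ler_wpM2l.
  by rewrite invr_ge0; lra.
exact: le_trans h2 hmax.1.
Qed.
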